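(* Let $\odot$ be a non-degenerate pseudo-multiplication and let $\tau$ be a $\sigma$-maxitive measure on a $\sigma$-algebra $\mathcal{B}$ on a nonempty set $E$ having the Radon–Nikodym property with respect to the idempotent $\odot$-integral. Then $\tau$ is semi-$\odot$-finite, i.e. for every $B\in\mathcal{B}$, $$\tau(B)=\sup\{\tau(A):A\in\mathcal{B},\ A\subset B,\ \tau(A)\text{ is }\odot\text{-finite}\}.$$
   Context: Write $\overline{\mathbb{R}}_+=[0,\infty]$. A pseudo-multiplication is a binary operation $\odot$ on $\overline{\mathbb{R}}_+$ with the following properties: - it is associative; - it is continuous on $(0,\infty)\times[0,\infty]$; - for every $t$, the map $s\mapsto s\odot t$ is continuous on $(0,\infty]$; - it is nondecreasing in each argument; - it has a left identity $1_\odot$, i.e. $1_\odot\odot t=t$ for all $t$; - it has no zero divisors, i.e. $s\odot t=0$ implies $s=0$ or $t=0$; - $0\odot t=t\odot 0=0$ for all $t$. Put $O(t)=\inf_{s>0}s\odot t$. An element $t$ is $\odot$-finite if $O(t)=0$, and $\odot$-infinite otherwise. The operation $\odot$ is non-degenerate if $1_\odot$ is $\odot$-finite. A $\sigma$-maxitive measure on $\mathcal{B}$ is a map $\nu:\mathcal{B}\to\overline{\mathbb{R}}_+$ with $\nu(\emptyset)=0$ and $\nu(\bigcup_j B_j)=\sup_j\nu(B_j)$ for every countable family. A map $f:E\to\overline{\mathbb{R}}_+$ is $\mathcal{B}$-measurable if $\{f>t\}\in\mathcal{B}$ for all $t\in[0,\infty)$. The idempotent $\odot$-integral is $\int^\infty_B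 f\odot d\tau=\sup_{t\in[0,\infty)}t\odot\tau(B\cap\{f>t\})$. $\nu\ll_\odot\tau$ means $\nu(B)\le\infty\odot\tau(B)$ for every $B\in\mathcal{B}$ with $\tau(B)$ $\odot$-finite. $\tau$ has the Radon–Nikodym property if every $\sigma$-maxitive $\nu\ll_\odot\tau$ admits a $\mathcal{B}$-measurable $c:E\to\overline{\mathbb{R}}_+$ with $\nu(B)=\int^\infty_B c\odot d\tau$ for all $B\in\mathcal{B}$. *)

(* Defs.v *)
From Stdlib Require Import Reals.
Open Scope R_scope.

Record nnR := mknn { nnval : R; nnpos : 0 <= nnval }.

Inductive ER := Fin (x : nnR) | Inf.

Definition ERzero : ER := Fin (mknn 0 (Rle_refl 0)).

Definition ERle (x y : ER) : Prop :=
  match x, y with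
  | Fin a, Fin b => nnval a <= nnval b
  | _, Inf => True
  | Inf, Fin _ => False
  end.

Definition ERlt (x y : ER) : Prop :=
  match x, y with
  | Fin a, Fin b => nnval a < nnval b
  | Fin _, Inf => True
  | Inf, _ => False
  end.

Definition is_sup (S : ER -> Prop) (s : ER) : Prop :=
  (forall x, S x -> ERle x s) /\
  (forall u, (forall x, S x -> ERle x u) -> ERle s u).

Definition is_inf (S : ER -> Prop) (s : ER) : Prop :=
  (forall x, S x -> ERle s x) /\
  (forall u, (forall x, S x -> ERle u x) -> ERle u s).

(** The order topology on [0,oo] is metrized by d(x,y) = |phi x - phi y|
    with the order isomorphism phi : [0,oo] -> [0,1], x |-> x/(1+x), oo |-> 1. *)
Definition ERphi (x : ER) : R :=
  match x with
  | Fin a => nnval a / (1 + nnval a)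
  | Inf => 1
  end.

Definition ERdist (x y : ER) : R := Rabs (ERphi x - ERphi y).

Definition is_pseudo_mult (op : ER -> ER -> ER) (one : ER) : Prop :=
  (forall s t u, op (op s t) u = op s (op t u)) /\
  (forall s0 : nnR, forall t0 : ER, 0 < nnval s0 ->
     forall eps, 0 < eps -> exists delta, 0 < delta /\
       forall (s : nnR) (t : ER), 0 < nnval s ->
         ERdist (Fin s) (Fin s0) < delta -> ERdist t t0 < delta ->
         ERdist (op (Fin s) t) (op (Fin s0) t0) < eps) /\
  (forall t s0, ERlt ERzero s0 ->
     forall eps, 0 < eps -> exists delta, 0 < delta /\
       forall s, ERlt ERzero s -> ERdist s s0 < delta ->
         ERdist (op s t) (op s0 t) < eps) /\
  (forall s s' t, ERle s s' -> ERle (op s t) (op s' t)) /\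
  (forall s t t', ERle t t' -> ERle (op s t) (op s t')) /\
  (forall t, op one t = t) /\
  (forall s t, op s t = ERzero -> s = ERzero \/ t = ERzero) /\
  (forall t, op ERzero t = ERzero /\ op t ERzero = ERzero).

Definition odot_finite (op : ER -> ER -> ER) (t : ER) : Prop :=
  is_inf (fun x => exists s, ERlt ERzero s /\ x = op s t) ERzero.

Definition non_degenerate (op : ER -> ER -> ER) (one : ER) : Prop :=
  odot_finite op one.

Definition is_sigma_algebra {E : Type} (B : (E -> Prop) -> Prop) : Prop :=
  B (fun _ => False) /\
  (forall A, B A -> B (fun x => ~ A x)) /\
  (forall F : nat -> (E -> Prop), (forall n, B (F n)) ->
     B (fun x => exists n, F n x)).

Definition sigma_maxitive {E : Type} (B : (E -> Prop) -> Prop)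
    (nu : (E -> Prop) -> ER) : Prop :=
  nu (fun _ => False) = ERzero /\
  (forall F : nat -> (E -> Prop), (forall n, B (F n)) ->
     is_sup (fun y => exists n, y = nu (F n)) (nu (fun x => exists n, F n x))).

Definition measurable {E : Type} (B : (E -> Prop) -> Prop) (f : E -> ER) : Prop :=
  forall t : nnR, B (fun x => ERlt (Fin t) (f x)).

Definition idem_integral {E : Type} (op : ER -> ER -> ER)
    (tau : (E -> Prop) -> ER) (A : E -> Prop) (f : E -> ER) (v : ER) : Prop :=
  is_sup (fun y => exists t : nnR,
            y = op (Fin t) (tau (fun x => A x /\ ERlt (Fin t) (f x)))) v.

Definition abs_cont {E : Type} (op : ER -> ER -> ER) (B : (E -> Prop) -> Prop)
    (nu tau : (E -> Prop) -> ER) : Prop :=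
  forall A, B A -> odot_finite op (tau A) -> ERle (nu A) (op Inf (tau A)).

Definition radon_nikodym_property {E : Type} (op : ER -> ER -> ER)
    (B : (E -> Prop) -> Prop) (tau : (E -> Prop) -> ER) : Prop :=
  forall nu, sigma_maxitive B nu -> abs_cont op B nu tau ->
    exists c : E -> ER, measurable B c /\
      forall A, B A -> idem_integral op tau A c (nu A).

Definition semi_odot_finite {E : Type} (op : ER -> ER -> ER)
    (B : (E -> Prop) -> Prop) (tau : (E -> Prop) -> ER) : Prop :=
  forall A, B A ->
    is_sup (fun y => exists A', B A' /\ (forall x, A' x -> A x) /\
                                odot_finite op (tau A') /\ y = tau A') (tau A).

(* Main.v *)
Require Import Defs.
From Stdlib Require Import Reals.
From Stdlib Require Import Classical ClassicalEpsilon FunctionalExtensionality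
  PropExtensionality ProofIrrelevance Lra.

Lemma nn_eq (a b : nnR) : nnval a = nnval b -> a = b.
Proof.
  destruct a as [a pa], b as [b pb]; simpl; intros ->.
  f_equal; apply proof_irrelevance.
Qed.

Lemma ERle_refl x : ERle x x.
Proof. destruct x; simpl; auto; lra. Qed.

Lemma ERle_trans x y z : ERle x y -> ERle y z -> ERle x z.
Proof. destruct x, y, z; simpl; auto; try lra; tauto. Qed.

Lemma ERle_zero x : ERle ERzero x.
Proof. destruct x as [[b pb]|]; simpl; auto. Qed.

Lemma ERle_zero_eq x : ERle x ERzero -> x = ERzero.
Proof.
  destruct x as [[b pb]|]; simpl; [|tauto]. intros H.
  unfold ERzero; f_equal; apply nn_eq; simpl; lra.
Qed.

Lemma ERlt_zero x : x <> ERzero -> ERlt ERzero x.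
Proof.
  destruct x as [[b pb]|]; simpl; auto. intros H.
  destruct (Rle_lt_or_eq_dec 0 b pb) as [h|h]; auto.
  exfalso; apply H; unfold ERzero; f_equal; apply nn_eq; simpl; auto.
Qed.

Lemma pred_ext {E} (P Q : E -> Prop) : (forall x, P x <-> Q x) -> P = Q.
Proof. intros H; apply functional_extensionality; intros x; apply propositional_extensionality; auto. Qed.

Lemma sig_inter {E} (B : (E -> Prop) -> Prop) (HB : is_sigma_algebra B) P Q :
  B P -> B Q -> B (fun x => P x /\ Q x).
Proof.
  destruct HB as [H0 [Hc Hu]]. intros HP HQ.
  set (F := fun n : nat => match n with 0 => fun x => ~ P x | _ => fun x => ~ Q x end).
  assert (HF : forall n, B (F n)) by (intros [|n]; simpl; auto).
  specialize (Hc _ (Hu F HF)).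
  replace (fun x => P x /\ Q x) with (fun x => ~ exists n, F n x); auto.
  apply pred_ext; intros x; split.
  - intros H; split; apply NNPP; intros H'; apply H.
    + exists 0%nat; exact H'.
    + exists 1%nat; exact H'.
  - intros [h1 h2] [[|n] Hn]; simpl in Hn; auto.
Qed.

Lemma tau_mono {E} (B : (E -> Prop) -> Prop) tau :
  sigma_maxitive B tau -> forall P Q, B P -> B Q -> (forall x, P x -> Q x) ->
  ERle (tau P) (tau Q).
Proof.
  intros [_ Hs] P Q HP HQ HPQ.
  set (F := fun n : nat => match n with 0 => P | _ => Q end).
  assert (HF : forall n, B (F n)) by (intros [|n]; simpl; auto).
  destruct (Hs F HF) as [Hub _].
  replace (fun x => exists n, F n x) with Q in Hub.
  - apply Hub. exists 0%nat; reflexivity.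
  - apply pred_ext; intros x; split.
    + intros h; exists 1%nat; exact h.
    + intros [[|n] h]; simpl in h; auto.
Qed.

Theorem mainTheorem9 (op : ER -> ER -> ER) (one : ER)
  (Hop : is_pseudo_mult op one) (Hnd : non_degenerate op one)
  (E : Type) (HE : inhabited E) (B : (E -> Prop) -> Prop)
  (HB : is_sigma_algebra B) (tau : (E -> Prop) -> ER)
  (Htau : sigma_maxitive B tau) (HRN : radon_nikodym_property op B tau) :
  semi_odot_finite op B tau.
Proof.
  destruct Hop as [Hass [_ [_ [Hm1 [Hm2 [Hid [Hzd Habs]]]]]]].
  assert (one_nz : one <> ERzero).
  { intros h. pose proof (Hid Inf) as h1. rewrite h in h1.
    rewrite (proj1 (Habs Inf)) in h1. discriminate. }
  assert (fin_le : forall x y, ERle y x -> odot_finite op x -> odot_finite op y).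
  { intros x y Hyx [_ Hx]. split; [intros; apply ERle_zero|].
    intros L HL. apply Hx. intros z [s [hs ->]].
    apply ERle_trans with (op s y); [apply HL; eauto | apply Hm2; auto]. }
  assert (fin_bound : forall a x, ERlt ERzero a -> ERle (op a x) one -> odot_finite op x).
  { intros a x Ha Hax. split; [intros; apply ERle_zero|].
    intros L HL. apply (proj2 Hnd). intros z [s [hs ->]].
    apply ERle_trans with (op (op s a) x).
    - apply HL. exists (op s a); split; auto.
      apply ERlt_zero; intros h. destruct (Hzd _ _ h) as [h'|h'].
      + subst s. simpl in hs; lra.
      + subst a. simpl in Ha; lra.
    - rewrite Hass. apply Hm2; auto. }
  intros A HA.
  split.
  { intros y [A' [HA' [Hsub [_ ->]]]]. apply tau_mono with B; auto. }
  intros U HU.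
  apply NNPP; intros HnU.
  set (nu := fun P : E -> Prop =>
    if excluded_middle_informative (ERle (tau (fun x => P x /\ A x)) U)
    then ERzero else one).
  assert (fam : forall P, B P -> (forall x, P x -> A x) -> odot_finite op (tau P) ->
     ERle (tau P) U).
  { intros P HP Hs Hf. apply HU. exists P; auto. }
  assert (Hnu : sigma_maxitive B nu).
  { split.
    - unfold nu. destruct excluded_middle_informative as [h|h]; auto.
      exfalso; apply h.
      replace (fun x : E => False /\ A x) with (fun _ : E => False).
      + rewrite (proj1 Htau). apply ERle_zero.
      + apply pred_ext; tauto.
    - intros F HF.
      assert (HFA : forall n, B (fun x => F n x /\ A x)) by (intros; apply sig_inter; auto).
      pose proof (proj2 Htau _ HFA) as Hs; cbv beta in Hs.
      replace (fun x => exists n, F n x /\ A x) with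
        (fun x => (exists n, F n x) /\ A x) in Hs
        by (apply pred_ext; intros x; split; [intros [[n h] h']; eauto | intros [n [h h']]; eauto]).
      unfold nu at 2. destruct excluded_middle_informative as [h|h].
      + split.
        * intros y [n ->]. unfold nu. destruct excluded_middle_informative as [h'|h'];
            [apply ERle_refl|].
          exfalso; apply h'. apply ERle_trans with (2 := h). apply (proj1 Hs). eauto.
        * intros; apply ERle_zero.
      + assert (Hn : exists n, ~ ERle (tau (fun x => F n x /\ A x)) U).
        { apply NNPP; intros Hn. apply h. apply (proj2 Hs).
          intros y [n ->]. apply NNPP; intros h'. apply Hn; eauto. }
        destruct Hn as [n Hn]. split.
        * intros y [m ->]. unfold nu. destruct excluded_middle_informative;
            [apply ERle_zero | apply ERle_refl].
        * intros u Hu. specialize (Hu (nu (F n)) (ex_intro _ n eq_refl)).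
          unfold nu in Hu. destruct excluded_middle_informative; tauto. }
  assert (Hac : abs_cont op B nu tau).
  { intros P HP Hf. unfold nu. destruct excluded_middle_informative as [h|h];
      [apply ERle_zero|].
    exfalso; apply h. apply fam.
    - apply sig_inter; auto.
    - tauto.
    - apply fin_le with (tau P); auto. apply tau_mono with B; auto.
      + apply sig_inter; auto.
      + tauto. }
  destruct (HRN nu Hnu Hac) as [c [Hc Hint]].
  assert (nuA : nu A = one).
  { unfold nu. destruct excluded_middle_informative as [h|h]; auto.
    exfalso; apply HnU.
    replace (fun x => A x /\ A x) with A in h; auto. apply pred_ext; tauto. }
  pose proof (Hint A HA) as HIA. rewrite nuA in HIA.
  assert (Ht : exists t : nnR,
     op (Fin t) (tau (fun x => A x /\ ERlt (Fin t) (c x))) <> ERzero).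
  { apply NNPP; intros Hn. apply one_nz. apply ERle_zero_eq. apply (proj2 HIA).
    intros y [t ->]. destruct (classic (op (Fin t) (tau (fun x => A x /\ ERlt (Fin t) (c x))) = ERzero)) as [h|h].
    - rewrite h; apply ERle_refl.
    - exfalso; apply Hn; eauto. }
  destruct Ht as [t Ht].
  set (P := fun x => A x /\ ERlt (Fin t) (c x)) in *.
  assert (HP : B P) by (apply sig_inter; auto).
  assert (tpos : ERlt ERzero (Fin t)).
  { apply ERlt_zero. intros h. apply Ht. rewrite h. apply (proj1 (Habs _)). }
  assert (PP : (fun x => P x /\ ERlt (Fin t) (c x)) = P)
    by (apply pred_ext; unfold P; tauto).
  pose proof (Hint P HP) as HIP.
  assert (Hle : ERle (op (Fin t) (tau P)) (nu P)).
  { apply (proj1 HIP). exists t. rewrite PP. reflexivity. }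
  assert (PA : (fun x => P x /\ A x) = P) by (apply pred_ext; unfold P; tauto).
  unfold nu in Hle. rewrite PA in Hle.
  destruct excluded_middle_informative as [h|h].
  - apply Ht. apply ERle_zero_eq. exact Hle.
  - apply h. apply fam; auto.
    + unfold P; tauto.
    + apply fin_bound with (Fin t); auto.
Qed.
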